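(* Let $n,m$ be positive integers and $t$ a nonnegative integer. Let $P$ be an induced path of a graph $G$ and let $x\in V(G)\setminus V(P)$ be such that $G\setminus V(P)\setminus x$ has $t$ components and $x$ has at least $(m+2)n^t$ neighbors in $P$. Then either $G$ has a $K_{2,n}$-minor, or $P$ has a subpath $P^*$ such that $x$ has exactly $m$ neighbors in $P^*$ and no vertex of $G\setminus V(P)$ other than $x$ has a neighbor in $P^*$.
   Context: Graphs are finite and simple; minors are simple minors. *)

(* Defs.v *)
From mathcomp Require Import all_boot.
Set Implicit Arguments. Unset Strict Implicit. Unset Printing Implicit Defensive.

Definition simple_graph (T : finType) (e : rel T) : Prop :=
  symmetric e /\ irreflexive e.

Definition induced (T : finType) (e : rel T) (A : {pred T}) : rel T :=
  [rel u v | [&& e u v, u \in A & v \in A]].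

Definition connected_set (T : finType) (e : rel T) (S : {set T}) : Prop :=
  S != set0 /\ {in S &, forall u v, connect (induced e (mem S)) u v}.

Definition induced_path (T : finType) (e : rel T) (P : seq T) : Prop :=
  [/\ P != [::], uniq P &
      forall (x0 : T) i j, i < size P -> j < size P ->
        e (nth x0 P i) (nth x0 P j)
        = ((i == j.+1) || (j == i.+1))].

Definition ncomp_outside (T : finType) (e : rel T) (P : seq T) (x : T) : nat :=
  let A := [pred y | (y \notin P) && (y != x)] in
  n_comp (induced e A) A.

Definition has_K2n_minor (T : finType) (e : rel T) (n : nat) : Prop :=
  exists (A1 A2 : {set T}) (B : 'I_n -> {set T}),
    [/\ connected_set e A1, connected_set e A2 &
        forall i, connected_set e (B i)] /\
    [/\ [disjoint A1 & A2],
        (forall i, [disjoint A1 & B i] /\ [disjoint A2 & B i]) &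
        (forall i j, i != j -> [disjoint B i & B j])] /\
    (forall i, (exists u v, [/\ u \in A1, v \in B i & e u v]) /\
               (exists u v, [/\ u \in A2, v \in B i & e u v])).

(* Main.v *)
Require Import Defs.
From mathcomp Require Import all_boot.
Set Implicit Arguments. Unset Strict Implicit. Unset Printing Implicit Defensive.

Section Aux.
Variables (T : finType) (e : rel T).
Hypothesis sym_e : symmetric e.

Lemma induced_sym (A : {pred T}) : symmetric (induced e A).
Proof. by move=> u v; rewrite /induced /= sym_e (andbC (u \in A)). Qed.

Lemma induced_mono (A B : {pred T}) : {subset A <= B} ->
  subrel (connect (induced e A)) (connect (induced e B)).
Proof.
move=> AB; apply: connect_sub => u v; rewrite /induced /= => /and3P[euv uA vA].
by apply: connect1; rewrite /induced /= euv !AB.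
Qed.

Lemma induced_eq (A B : {pred T}) : A =i B ->
  connect (induced e A) =2 connect (induced e B).
Proof. by move=> AB; apply: eq_connect => u v; rewrite /induced /= !AB. Qed.

Lemma sorted_conn s : sorted e s ->
  {in s &, forall u v, connect (induced e [pred z | z \in s]) u v}.
Proof.
elim: s => [|a s IH] //= Hp.
have Hs : sorted e s := path_sorted Hp.
have sub : {subset [pred z | z \in s] <= [pred z | z \in a :: s]}.
  by move=> z; rewrite !inE => ->; rewrite orbT.
have key : forall w, w \in s -> connect (induced e [pred z | z \in a :: s]) a w.
  move=> w ws; case: s Hp IH Hs sub ws => // b s' /andP[eab _] IH Hs sub ws.
  apply: (connect_trans (connect1 _) (induced_mono sub (IH Hs b w _ ws))).
    by rewrite /induced /= eab !inE !eqxx /= ?orbT.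
  by rewrite mem_head.
have symc := sym_connect_sym (induced_sym [pred z | z \in a :: s]).
move=> u v; rewrite !inE => /orP[/eqP->|us] /orP[/eqP->|vs].
- exact: connect0.
- exact: key.
- by rewrite symc; apply: key.
- exact: (induced_mono sub (IH Hs u v us vs)).
Qed.

Lemma connect_in (A : {pred T}) u v : connect (induced e A) u v -> v = u \/ v \in A.
Proof.
move=> /connectP[p Hp ->]; case/lastP: p Hp => [|p z]; first by left.
by rewrite rcons_path last_rcons /induced /= => /andP[_ /and3P[_ _ ->]]; right.
Qed.

Lemma comp_conn (A : {pred T}) u : u \in A -> forall v, connect (induced e A) u v ->
  connect (induced e [pred y | (y \in A) && connect (induced e A) u y]) u v.
Proof.
move=> uA v /connectP[p Hp ->]; elim/last_ind: p Hp => [|p z IH].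
  by rewrite connect0.
rewrite rcons_path last_rcons => /andP[Hp Hl].
apply: connect_trans (IH Hp) (connect1 _).
have cl : connect (induced e A) u (last u p) by apply/connectP; exists p.
move: Hl; rewrite /induced /= => /and3P[ez lA zA].
rewrite /induced /= !inE ez lA zA cl /=.
apply: connect_trans cl (connect1 _); by rewrite /induced /= ez lA zA.
Qed.

Lemma prefix_count (a : pred T) c Q : c <= count a Q ->
  exists b r, Q = b ++ r /\ count a b = c.
Proof.
elim: Q c => [|z Q IH] c /=.
  by rewrite leqn0 => /eqP->; exists [::], [::].
case: c => [|c] H; first by exists [::], (z :: Q).
case az: (a z) H => /= H.
  have [b [r [-> <-]]] := IH c H.
  by exists (z :: b), r; rewrite /= az.
have [b [r [-> <-]]] := IH c.+1 H.
by exists (z :: b), r; rewrite /= az.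
Qed.

Lemma split_blocks (a : pred T) c j Q : j * c <= count a Q ->
  exists bs rest, [/\ size bs = j, Q = flatten bs ++ rest &
                    all (fun b => count a b == c) bs].
Proof.
elim: j Q => [|j IH] Q H.
  by exists [::], Q.
rewrite mulSn in H.
have [b [r [EQ Cb]]] := prefix_count (leq_trans (leq_addr _ _) H).
have Hr : j * c <= count a r.
  by move: H; rewrite EQ count_cat Cb leq_add2l.
have [bs [rest [Sz Er Al]]] := IH r Hr.
by exists (b :: bs), rest; rewrite /= Sz EQ Er catA Cb eqxx Al.
Qed.

Lemma flatten_disj (bs : seq (seq T)) : uniq (flatten bs) ->
  forall i j, i < size bs -> j < size bs -> i != j ->
  forall z, z \in nth [::] bs i -> z \in nth [::] bs j -> False.
Proof.
elim: bs => [|b bs IH] //= U i j; rewrite cat_uniq in U.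
case/and3P: U => _ Hn U.
have inF : forall k z, k < size bs -> z \in nth [::] bs k -> z \in flatten bs.
  by move=> k z kl zk; apply/flattenP; exists (nth [::] bs k) => //; apply: mem_nth.
case: i => [|i]; case: j => [|j] //= il jl ij z; rewrite ?ltnS in il jl.
- move=> zb zj; move/hasPn: Hn => /(_ z (inF j z jl zj)); by rewrite zb.
- move=> zi zb; move/hasPn: Hn => /(_ z (inF i z il zi)); by rewrite zb.
- by apply: IH.
Qed.

Lemma mem_flatten_infix (bs : seq (seq T)) b : b \in bs -> infix b (flatten bs).
Proof.
elim: bs => [|b' bs IH] //=; rewrite inE => /orP[/eqP->|H].
  exact: infix_catr (infix_refl _).
exact: infix_catl (IH H).
Qed.

End Aux.

Section Main.
Variables (T : finType) (e : rel T) (n m : nat) (P : seq T) (x : T).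
Hypotheses (sym_e : symmetric e) (n0 : 0 < n) (m0 : 0 < m)
  (xP : x \notin P) (uP : uniq P) (sP : sorted e P).

Definition O : {pred T} := [pred y | (y \notin P) && (y != x)].
Definition E := induced e O.

Lemma main_ind rs : all (mem O) rs -> forall Q, infix Q P ->
  m * n ^ size rs <= count (e x) Q ->
  (forall y, y \in O -> (forall r, r \in rs -> ~~ connect E r y) ->
     forall z, z \in Q -> ~~ e y z) ->
  has_K2n_minor e n \/ exists Ps, [/\ Ps != [::], infix Ps Q, count (e x) Ps = m &
     forall y, y \in O -> forall z, z \in Ps -> ~~ e y z].
Proof.
elim: rs => [|r rs IH] /=.
  move=> _ Q QP; rewrite expn0 muln1 => /prefix_count [b [rest [EQ Cb]]] Hy.
  right; exists b; split => //.
  - by apply/eqP => b0; move: Cb m0; rewrite b0 => <-.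
  - by rewrite EQ; apply: infix_catr (infix_refl _).
  - move=> y yO z zb; apply: Hy => //; rewrite EQ mem_cat zb //.
move=> /andP[rO allrs] Q QP.
set c := m * n ^ size rs.
have c0 : 0 < c by rewrite muln_gt0 m0 expn_gt0 n0.
rewrite expnS mulnCA => /split_blocks [bs [rest [Sz EQ Al]]] Hy.
have uQ : uniq Q := infix_uniq QP uP.
have bsQ : forall b, b \in bs -> infix b Q.
  by move=> b bb; rewrite EQ; apply: infix_catr; apply: mem_flatten_infix.
set nb := fun b : seq T => [exists y, [&& y \in O, connect E r y & has (e y) b]].
case: (boolP (has (fun b => ~~ nb b) bs)).
  case/hasP => b bb nbb.
  have bP : infix b P := infix_trans (bsQ b bb) QP.
  have Cb : count (e x) b = c by move/allP: Al => /(_ b bb) /eqP.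
  have := IH allrs b bP _ _.
  rewrite Cb leqnn => /(_ isT) [].
    move=> y yO Hr z zb; case: (boolP (connect E r y)) => ry.
      apply: contra nbb => eyz; apply/existsP; exists y; rewrite yO ry /=.
      by apply/hasP; exists z.
    apply: Hy => //; last first. by have := mem_infix (bsQ b bb); apply.
    by move=> r'; rewrite inE => /orP[/eqP->//|]; apply: Hr.
  by left.
  case=> Ps [Ps0 Psb CPs HPs]; right; exists Ps; split => //.
  exact: infix_trans Psb (bsQ b bb).
move/hasPn => Hnb; left.
have ufl : uniq (flatten bs) by move: uQ; rewrite EQ cat_uniq => /andP[].
have bsP : forall b, b \in bs -> {subset b <= P}.
  by move=> b bb z zb; apply: (mem_infix QP); apply: (mem_infix (bsQ b bb)).
have nthbs : forall i : 'I_n, nth [::] bs i \in bs by move=> i; rewrite mem_nth // Sz.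
pose C := [set y | (y \in O) && connect E r y].
exists [set x], C, (fun i : 'I_n => [set z | z \in nth [::] bs i]).
split; [split|split; [split|]].
- split; first by apply/set0Pn; exists x; rewrite inE.
  by move=> u v; rewrite !inE => /eqP-> /eqP->; apply: connect0.
- split; first by apply/set0Pn; exists r; rewrite inE rO connect0.
  move=> u v; rewrite !inE => /andP[uO ru] /andP[vO rv].
  have hc : forall w, connect E r w ->
      connect (induced e (mem C)) r w.
    move=> w rw; rewrite (@induced_eq _ e _ [pred y | (y \in O) && connect E r y]).
      exact: comp_conn.
    by move=> z; rewrite !inE.
  apply: connect_trans (hc v rv).
  by rewrite (sym_connect_sym (induced_sym sym_e _)); apply: hc.
- move=> i; have bb := nthbs i.
  have Cb : count (e x) (nth [::] bs i) = c by move/allP: Al => /(_ _ bb) /eqP.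
  split.
    have : has (e x) (nth [::] bs i) by rewrite has_count Cb.
    by case/hasP => z zb _; apply/set0Pn; exists z; rewrite inE.
  move=> u v; rewrite !inE => ub vb.
  rewrite (@induced_eq _ e _ [pred z | z \in nth [::] bs i]); last by move=> z; rewrite !inE.
  apply: sorted_conn => //.
  exact: infix_sorted (infix_trans (bsQ _ bb) QP) sP.
- rewrite disjoint_subset; apply/subsetP => z; rewrite !inE => /eqP->.
  by rewrite eqxx andbF.
- move=> i; split; rewrite disjoint_subset; apply/subsetP => z; rewrite !inE.
    move=> /eqP->; apply/negP => xb; move: xP; by rewrite (bsP _ (nthbs i) x xb).
  move=> /andP[zO _]; apply/negP => zb; move: zO; by rewrite /O /= (bsP _ (nthbs i) z zb).
- move=> i j ij; rewrite disjoint_subset; apply/subsetP => z; rewrite !inE => zi.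
  have il : i < size bs by rewrite Sz ltn_ord.
  have jl : j < size bs by rewrite Sz ltn_ord.
  by apply/negP => zj; apply: (flatten_disj ufl il jl ij zi zj).
- move=> i; have bb := nthbs i.
  have Cb : count (e x) (nth [::] bs i) = c by move/allP: Al => /(_ _ bb) /eqP.
  split.
    have : has (e x) (nth [::] bs i) by rewrite has_count Cb.
    by case/hasP => z zb exz; exists x, z; rewrite !inE eqxx zb exz.
  have := Hnb _ bb; rewrite negbK => /existsP [y /and3P[yO ry /hasP[z zb eyz]]].
  exists y, z; rewrite !inE zb eyz; split => //; rewrite ry andbT; exact: yO.
Qed.

End Main.

Theorem mainTheorem10 (T : finType) (e : rel T) (n m t : nat) (P : seq T) (x : T) :
  simple_graph e -> 0 < n -> 0 < m ->
  induced_path e P -> x \notin P ->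
  ncomp_outside e P x = t ->
  (m + 2) * n ^ t <= count (e x) P ->
  has_K2n_minor e n \/
  exists Ps : seq T,
    [/\ Ps != [::], infix Ps P, count (e x) Ps = m &
        forall y, y \notin P -> y != x -> forall z, z \in Ps -> ~~ e y z].
Proof.
move=> [sym_e _] n0 m0 [P0 uP Hind] xP Ht Hc.
have sP : sorted e P.
  case: P P0 uP Hind xP Hc Ht => // a p _ _ Hind _ _ _ /=.
  apply/(pathP a) => i hi.
  have := Hind a i i.+1 (ltnW hi) hi.
  by rewrite eqxx orbT.
set rs := enum (predI (roots (E e P x)) (O P x)).
have St : size rs = t by rewrite -Ht /rs -cardE.
have Hall : all (mem (O P x)) rs.
  by apply/allP => r; rewrite mem_enum inE => /andP[].
have Hb : m * n ^ size rs <= count (e x) P.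
  by rewrite St; apply: leq_trans Hc; rewrite leq_mul2r leq_addr orbT.
have symE : connect_sym (E e P x) by apply: sym_connect_sym; apply: induced_sym.
have Hcond : forall y, y \in O P x -> (forall r, r \in rs -> ~~ connect (E e P x) r y) ->
     forall z, z \in P -> ~~ e y z.
  move=> y yO Hr; exfalso.
  have hroot : root (E e P x) y \in rs.
    rewrite mem_enum inE (roots_root symE) /=.
    by case: (connect_in (connect_root (E e P x) y)) => [->|h]; [exact: yO | exact: h].
  by move: (Hr _ hroot); rewrite symE connect_root.
case: (@main_ind T e n m P x sym_e n0 m0 xP uP sP rs Hall P (infix_refl P) Hb Hcond).
  by left.
case=> Ps [Ps0 PsP CPs HPs]; right; exists Ps; split => //.
by move=> y yP yx z zPs; apply: HPs => //; rewrite /O inE yP yx.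
Qed.
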